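(* For every $\epsilon>0$ there exists $n_0\in\mathbb N$ such that the following holds for all $n>n_0$. Let $0<\alpha<1$ and suppose $\sigma\in S_n$ has no fixed points and has at most $n^{\alpha}$ cycles of length at most $\lceil 2/\epsilon\rceil$. Then $E(\sigma)\le\alpha/2+\epsilon/2$.
   Context: For $\sigma\in S_n$ let $f_\sigma(i)$ be the number of $i$-cycles of $\sigma$ (fixed points are $1$-cycles). Define $e_1,\dots,e_n$ by $e_1+\cdots+e_k=\max\left(\frac{\log\left(\sum_{i=1}^k i f_\sigma(i)\right)}{\log n},0\right)$ for $1\le k\le n$ (with $\log 0=-\infty$), and set $E(\sigma)=\sum_{i=1}^n e_i/i$. *)

(* Defs.v *)
From Stdlib Require Import Reals ZArith List.
From mathcomp Require Import all_boot all_fingroup.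

Set Implicit Arguments.
Unset Strict Implicit.
Unset Printing Implicit Defensive.

Definition cyc_count (n : nat) (s : 'S_n) (i : nat) : nat :=
  #|[set C in porbits s | #|C| == i]|.

Definition Spart (n : nat) (s : 'S_n) (k : nat) : nat :=
  \sum_(1 <= i < k.+1) i * cyc_count s i.

Definition ncycles_le (n : nat) (s : 'S_n) (c : nat) : nat :=
  #|[set C in porbits s | #|C| <= c]|.

Local Open Scope R_scope.

(* e_1 + ... + e_k = max(log(Spart k)/log n, 0), with log 0 = -infinity
   (so the max is 0 when Spart k = 0). *)
Definition Ppart (n : nat) (s : 'S_n) (k : nat) : R :=
  if Spart s k == 0%N then 0
  else Rmax (ln (INR (Spart s k)) / ln (INR n)) 0.

Definition e_coef (n : nat) (s : 'S_n) (k : nat) : R :=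
  Ppart s k - Ppart s (k.-1).

Definition Eperm (n : nat) (s : 'S_n) : R :=
  fold_right Rplus 0 (List.map (fun i => e_coef s i / INR i) (iota 1 n)).

Definition Rceil (x : R) : Z := (- Int_part (- x))%Z.

(* Main.v *)
Require Import Defs.
From Stdlib Require Import Reals ZArith Lia Lra List.
From mathcomp Require seq.
Local Open Scope R_scope.

Fixpoint Fs (f : nat -> R) (m : nat) : R :=
  match m with 0%nat => 0 | S m' => Fs f m' + f (S m') end.

Lemma fold_iota_S (f : nat -> R) m : forall a,
  fold_right Rplus 0 (List.map f (seq.iota a (S m))) =
  fold_right Rplus 0 (List.map f (seq.iota a m)) + f (a + m)%nat.
Proof.
induction m as [|m IH]; intros a; simpl.
- rewrite Nat.add_0_r; ring.
- simpl in IH. rewrite IH. replace (S a + m)%nat with (a + S m)%nat by lia. ring.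
Qed.

Lemma fold_Fs (f : nat -> R) m :
  fold_right Rplus 0 (List.map f (seq.iota 1 m)) = Fs f m.
Proof.
induction m as [|m IH]; [reflexivity|].
rewrite fold_iota_S, IH. simpl. reflexivity.
Qed.

Lemma div_le (a b c : R) : 0 < c -> a <= b * c -> a / c <= b.
Proof.
intros Hc H. replace b with (b * c / c) by (field; lra).
unfold Rdiv. apply Rmult_le_compat_r; [left; apply Rinv_0_lt_compat; lra| lra].
Qed.

Lemma step (F p p' x A B : R) : 0 < x -> F <= A + p/x ->
  p * (1/x - 1/(x+1)) <= B - A -> F + (p' - p)/(x+1) <= B + p'/(x+1).
Proof.
intros Hx H1 H2.
assert (E1 : (p' - p)/(x+1) = p'/(x+1) - p/(x+1)) by (field; lra).
assert (E2 : p/x - p/(x+1) = p * (1/x - 1/(x+1))) by (field; lra).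
lra.
Qed.

Lemma dpos (x : R) : 0 < x -> 0 <= 1/x - 1/(x+1).
Proof.
intros Hx. replace (1/x - 1/(x+1)) with (1/(x*(x+1))) by (field; lra).
left; apply Rdiv_lt_0_compat; [lra| apply Rmult_lt_0_compat; lra].
Qed.

Lemma abel_bound (P : nat -> R) (c n : nat) (beta : R) :
  P 0%nat = 0 -> P 1%nat = 0 -> (forall m, 0 <= P m <= 1) ->
  (forall m, (m <= c)%nat -> P m <= beta) -> 0 <= beta -> (1 <= c)%nat -> (c < n)%nat ->
  Fs (fun i => (P i - P (pred i)) / INR i) n <= beta/2 + 1/(INR c + 1).
Proof.
intros P0 P1 Pb Pc Hb Hc Hn.
set (f := (fun i => (P i - P (pred i)) / INR i)).
assert (Fstep : forall m, Fs f (S m) = Fs f m + (P (S m) - P m) / (INR m + 1)).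
{ intros m. simpl. unfold f. rewrite S_INR. reflexivity. }
assert (I1 : forall d, (2 + d <= c + 1)%nat ->
  Fs f (2 + d) <= beta * (1/2 - 1/INR (2 + d)) + P (2+d)%nat / INR (2 + d)).
{ induction d as [|d IH]; intros Hd.
  - simpl. unfold f. simpl. rewrite P0, P1.
    replace (1 + 1) with 2 by ring. replace (1/2 - 1/2) with 0 by field.
    lra.
  - replace (2 + S d)%nat with (S (2 + d)) by lia.
    rewrite Fstep, (S_INR (2+d)).
    apply step with (A := beta * (1/2 - 1/INR (2+d))).
    + apply lt_0_INR; lia.
    + apply IH; lia.
    + assert (0 <= 1 / INR (2 + d) - 1 / (INR (2 + d) + 1)) by (apply dpos, lt_0_INR; lia).
      assert (P (2+d)%nat <= beta) by (apply Pc; lia).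
      replace (beta * (1 / 2 - 1 / (INR (2 + d) + 1)) - beta * (1 / 2 - 1 / INR (2 + d)))
        with (beta * (1 / INR (2 + d) - 1 / (INR (2 + d) + 1))) by ring.
      apply Rmult_le_compat_r; lra. }
assert (I2 : forall d, Fs f (c + 1 + d) <=
   beta/2 + 1/(INR c + 1) - 1/INR (c+1+d) + P (c+1+d)%nat / INR (c+1+d)).
{ induction d as [|d IH].
  - rewrite Nat.add_0_r.
    replace (c + 1)%nat with (2 + (c - 1))%nat by lia.
    eapply Rle_trans. apply I1; lia.
    replace (2 + (c - 1))%nat with (c + 1)%nat by lia.
    rewrite plus_INR. simpl (INR 1).
    assert (0 <= beta / (INR c + 1)).
    { apply Rmult_le_pos; [lra|left; apply Rinv_0_lt_compat; apply Rplus_le_lt_0_compat; [apply pos_INR|lra]]. }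
    assert (0 <= 1 / (INR c + 1)).
    { apply Rmult_le_pos; [lra|left; apply Rinv_0_lt_compat; apply Rplus_le_lt_0_compat; [apply pos_INR|lra]]. }
    replace (beta * (1 / 2 - 1 / (INR c + 1))) with (beta/2 - beta / (INR c + 1)) by (field; apply Rgt_not_eq, Rplus_le_lt_0_compat; [apply pos_INR|lra]).
    lra.
  - replace (c + 1 + S d)%nat with (S (c + 1 + d)) by lia.
    rewrite Fstep, (S_INR (c + 1 + d)).
    apply step with (A := beta/2 + 1/(INR c + 1) - 1/INR (c+1+d)).
    + apply lt_0_INR; lia.
    + apply IH.
    + assert (0 <= 1 / INR (c+1+d) - 1 / (INR (c+1+d) + 1)) by (apply dpos, lt_0_INR; lia).
      destruct (Pb (c+1+d)%nat).
      replace (beta / 2 + 1 / (INR c + 1) - 1 / (INR (c + 1 + d) + 1) -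
        (beta / 2 + 1 / (INR c + 1) - 1 / INR (c + 1 + d))) with
        (1 * (1 / INR (c+1+d) - 1 / (INR (c+1+d) + 1))) by ring.
      apply Rmult_le_compat_r; lra. }
replace n with (c + 1 + (n - c - 1))%nat by lia.
eapply Rle_trans. apply I2.
set (m := (c + 1 + (n - c - 1))%nat).
assert (Hm : 0 < INR m) by (apply lt_0_INR; unfold m; lia).
destruct (Pb m).
assert (P m / INR m <= 1 / INR m).
{ unfold Rdiv. apply Rmult_le_compat_r; [left; apply Rinv_0_lt_compat; lra|lra]. }
lra.
Qed.

From mathcomp Require Import all_boot all_fingroup zify.
Local Close Scope R_scope.

Lemma card_sep (T : finType) (P : {set T}) (Q : pred T) :
  #|[set C in P | Q C]| = \sum_(C in P) (Q C : nat).
Proof.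
rewrite -sum1_card big_mkcond /= [RHS]big_mkcond /=.
apply: eq_bigr => C _; rewrite inE; by case: (C \in P); case: (Q C).
Qed.

Lemma gk_eq (k x : nat) :
  \sum_(1 <= i < k.+1) i * (x == i) = x * (x <= k).
Proof.
elim: k => [|k IH]; first by rewrite big_geq //; case: x => // x; rewrite muln0.
rewrite big_nat_recr //= IH.
case E1: (x <= k); case E2: (x == k.+1); case E3: (x <= k.+1);
  move: E1 E2 E3; rewrite /= ?muln0 ?muln1 ?addn0 ?add0n; lia.
Qed.

Lemma Spart_sum (n : nat) (s : 'S_n) (k : nat) :
  Spart s k = \sum_(C in porbits s) #|C| * (#|C| <= k).
Proof.
rewrite /Spart.
under eq_bigr => i _ do rewrite /cyc_count card_sep big_distrr /=.
rewrite exchange_big /=; apply: eq_bigr => C _; exact: gk_eq.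
Qed.

Lemma sum_porbits (n : nat) (s : 'S_n) :
  \sum_(C in porbits s) #|C| = n.
Proof.
rewrite -[RHS]card_ord -sum1_card (partition_big_imset (porbit s)) /=.
apply: eq_bigr => C /imsetP [y _ ->].
rewrite -sum1_card; apply: eq_bigl => x; by rewrite eq_porbit_mem.
Qed.

Lemma Spart_le_n (n : nat) (s : 'S_n) k : (Spart s k <= n)%N.
Proof.
rewrite Spart_sum; apply: (leq_trans _ (eq_leq (sum_porbits _ s))); apply: leq_sum => C _.
by case: (#|C| <= k); rewrite ?muln1 ?muln0.
Qed.

Lemma Spart_le_c (n : nat) (s : 'S_n) k c : (k <= c)%N ->
  (Spart s k <= c * ncycles_le s c)%N.
Proof.
move=> kc; rewrite Spart_sum /ncycles_le card_sep big_distrr /=.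
apply: leq_sum => C _.
case H: (#|C| <= k); rewrite ?muln0 //.
have -> : (#|C| <= c) by apply: leq_trans kc.
by rewrite !muln1 (leq_trans H kc).
Qed.

Lemma Spart1 (n : nat) (s : 'S_n) : (forall x, s x <> x) -> Spart s 1 = 0%N.
Proof.
move=> nf; rewrite Spart_sum big1 // => C /imsetP [y _ ->].
case H: (#|porbit s y| <= 1); rewrite ?muln0 //.
have : #|porbit s y| == 1.
  by rewrite eqn_leq H lt0n card_porbit_neq0.
case/cards1P => z Hz.
have := porbit_id s y; have := mem_porbit s 1 y.
rewrite Hz !inE expg1 => /eqP Hsy /eqP Hy; by case: (nf y); rewrite Hsy Hy.
Qed.

From Stdlib Require Import Lra Lia.
Local Open Scope R_scope.

Lemma ln_le' (x y : R) : 0 < x -> x <= y -> ln x <= ln y.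
Proof.
move=> Hx [H|->]; [left; exact: ln_increasing | lra].
Qed.

Lemma Rceil_ge (x : R) : 0 < x -> x <= INR (Z.to_nat (Rceil x)).
Proof.
move=> Hx.
have [H1 H2] := archimed (- x).
have Hge : x <= IZR (Rceil x).
  rewrite /Rceil /Int_part opp_IZR minus_IZR; simpl (IZR 1). lra.
have Hpos : (0 <= Rceil x)%Z.
  apply: le_IZR; simpl (IZR 0); lra.
by rewrite INR_IZR_INZ Z2Nat.id.
Qed.

Lemma Rdiv_le_0_compat (a b : R) : 0 <= a -> 0 < b -> 0 <= a / b.
Proof. move=> Ha Hb; apply: Rmult_le_pos => //; left; exact: Rinv_0_lt_compat. Qed.

Lemma Spart0 (n : nat) (s : 'S_n) : Spart s 0 = 0%N.
Proof. by rewrite /Spart big_geq. Qed.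

Theorem lemma2p7 :
  forall eps : R, 0 < eps ->
  exists n0 : nat, forall n : nat, (n0 < n)%N ->
  forall alpha : R, 0 < alpha < 1 ->
  forall s : 'S_n,
    (forall x, s x <> x) ->
    INR (ncycles_le s (Z.to_nat (Rceil (2 / eps)))) <= Rpower (INR n) alpha ->
    Eperm s <= alpha / 2 + eps / 2.
Proof.
move=> eps Heps.
have Hx : 0 < 2 / eps by apply: Rdiv_lt_0_compat; lra.
have Hc := Rceil_ge (2 / eps) Hx.
move: Hc; set c := Z.to_nat (Rceil (2 / eps)) => Hc.
have Hc0 : 0 < INR c by lra.
have Hc1 : (1 <= c)%N.
  by case: c Hc0 {Hc} => [|c']; [simpl; lra | ].
have Hceps : 2 <= INR c * eps.
  have -> : 2 = 2 / eps * eps by field; lra.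
  apply: Rmult_le_compat_r; lra.
set mu := eps - 2 / (INR c + 1).
have Hmu : 0 < mu.
  have -> : mu = (eps * (INR c + 1) - 2) / (INR c + 1) by rewrite /mu; field; lra.
  apply: Rdiv_lt_0_compat; lra.
set L := ln (INR c).
have HL : 0 <= L.
  rewrite /L -ln_1; apply: ln_le'; first lra.
  by have := le_INR 1 c (elimT leP Hc1); simpl.
set X := exp (L / mu).
exists (maxn c.+1 (maxn 2 (Z.to_nat (up X)))).
move=> n Hn alpha Halpha s Hfix Hcyc.
have Hcn : (c < n)%N by move: Hn; lia.
have H2n : (2 <= n)%N by move: Hn; lia.
have HXn : X < INR n.
  have [H1 _] := archimed X.
  have HX0 : 0 < X by exact: exp_pos.
  have Hup : (0 <= up X)%Z by apply: Z.lt_le_incl; apply: lt_0_IZR; lra.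
  have : INR (Z.to_nat (up X)) < INR n.
    apply: lt_INR; apply/ltP; move: Hn; lia.
  rewrite INR_IZR_INZ Z2Nat.id //. lra.
have Hlnn : L / mu < ln (INR n).
  rewrite -[L / mu]ln_exp; apply: ln_increasing => //; exact: exp_pos.
have Hlnpos : 0 < ln (INR n).
  have : 0 <= L / mu by apply: Rdiv_le_0_compat; lra.
  lra.
have Hn0 : 0 < INR n by apply: lt_0_INR; apply/ltP; lia.
set q := L / ln (INR n).
have Hq : q <= mu.
  apply: div_le => //.
  have : L < mu * ln (INR n).
    have -> : L = L / mu * mu by field; lra.
    rewrite Rmult_comm; apply: Rmult_lt_compat_l => //.
  lra.
have Hq0 : 0 <= q by apply: Rdiv_le_0_compat; lra.
set beta := alpha + q.
have Hb : 0 <= beta by rewrite /beta; lra.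
have PS : forall m, Spart s m <> 0%N -> 0 < INR (Spart s m).
  move=> m Hm; apply: lt_0_INR; apply/ltP; move: Hm; lia.
have Pb : forall m, 0 <= Ppart s m <= 1.
  move=> m; rewrite /Ppart; case: eqP => Hm; first lra.
  split; first exact: Rmax_r.
  apply: Rmax_lub; last lra.
  apply: div_le => //; rewrite Rmult_1_l; apply: ln_le'; first exact: PS.
  apply: le_INR; apply/leP; exact: Spart_le_n.
have Pc : forall m, (m <= c)%coq_nat -> Ppart s m <= beta.
  move=> m Hm; rewrite /Ppart; case: eqP => HS; first lra.
  apply: Rmax_lub => //.
  apply: div_le => //.
  have Hprod : INR (Spart s m) <= INR c * Rpower (INR n) alpha.
    apply: (Rle_trans _ (INR c * INR (ncycles_le s c))).
      rewrite -mult_INR; apply: le_INR; apply/leP; exact: (Spart_le_c _ s m c (introT leP Hm)).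
    apply: Rmult_le_compat_l => //; lra.
  have HRp : 0 < Rpower (INR n) alpha by rewrite /Rpower; exact: exp_pos.
  apply: (Rle_trans _ (ln (INR c * Rpower (INR n) alpha))).
    apply: ln_le' => //; exact: PS.
  rewrite ln_mult // ln_Rpower -/L.
  have -> : beta * ln (INR n) = alpha * ln (INR n) + q * ln (INR n) by rewrite /beta; ring.
  have -> : q * ln (INR n) = L by rewrite /q; field; lra.
  lra.
have P0 : Ppart s 0 = 0 by rewrite /Ppart Spart0 eqxx.
have P1 : Ppart s 1 = 0 by rewrite /Ppart Spart1 // eqxx.
have Hab := abel_bound _ _ _ _ P0 P1 Pb Pc Hb (elimT leP Hc1 : (1 <= c)%coq_nat) (elimT ltP Hcn : (c < n)%coq_nat).
rewrite /Eperm fold_Fs.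
apply: (Rle_trans _ _ _ Hab).
have E2 : 2 / (INR c + 1) = 2 * (1 / (INR c + 1)) by field; lra.
rewrite /mu E2 in Hq.
rewrite /beta.
lra.
Qed.
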